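(* For every $n\ge 4$ and every integer $\ell\ge 1$, there is no perfect lattice code in $\mathcal{A}(n,n-2,\ell)$.
   Context: For integers $n\ge 1$, $0\le t\le n$, $\ell\ge 1$, let $\mathcal{S}(n,t,\ell)=\{\mathcal{E}=(\varepsilon_1,\dots,\varepsilon_n)\in\mathbb{Z}^n: 0\le\varepsilon_i\le\ell \text{ for all } i,\ w_H(\mathcal{E})\le t\}$, where $w_H$ is the number of nonzero coordinates. A lattice here is an integer lattice: the set of integer combinations of $n$ linearly independent vectors of $\mathbb{Z}^n$. $\mathcal{A}(n,t,\ell)$ is the set of lattices $\mathcal{L}\subseteq\mathbb{Z}^n$ that are packings with $\mathcal{S}(n,t,\ell)$, i.e. the translates $X+\mathcal{S}(n,t,\ell)$, $X\in\mathcal{L}$, are pairwise disjoint (lattice codes correcting $t$ asymmetric errors of limited magnitude $\ell$). Such $\mathcal{L}$ is perfect if these translates also cover $\mathbb{Z}^n$. *)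

(* Defs.v *)
From mathcomp Require Import all_boot all_order all_algebra.
Set Implicit Arguments. Unset Strict Implicit. Unset Printing Implicit Defensive.
Import Order.TTheory GRing.Theory Num.Theory.
Local Open Scope ring_scope.

Definition zvec (n : nat) := 'I_n -> int.

Definition wH (n : nat) (e : zvec n) : nat := #|[pred i : 'I_n | e i != 0]|.

Definition inS (n t l : nat) (e : zvec n) : Prop :=
  (forall i, 0 <= e i <= l%:Z) /\ (wH e <= t)%N.

Definition zcomb (n : nat) (b : 'I_n -> zvec n) (c : 'I_n -> int) : zvec n :=
  fun j => \sum_(i < n) c i * b i j.

Definition lin_indep (n : nat) (b : 'I_n -> zvec n) : Prop :=
  forall c : 'I_n -> int, (forall j, zcomb b c j = 0) -> forall i, c i = 0.

Definition in_lattice (n : nat) (b : 'I_n -> zvec n) (X : zvec n) : Prop :=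
  exists c : 'I_n -> int, forall j, X j = zcomb b c j.

(* L(b) is a packing with S(n,t,l): translates X + S are pairwise disjoint *)
Definition packing (n t l : nat) (b : 'I_n -> zvec n) : Prop :=
  forall X Y e1 e2 : zvec n, in_lattice b X -> in_lattice b Y ->
    inS t l e1 -> inS t l e2 ->
    (forall j, X j + e1 j = Y j + e2 j) -> forall j, X j = Y j.

Definition covering (n t l : nat) (b : 'I_n -> zvec n) : Prop :=
  forall Z : zvec n, exists X e : zvec n,
    in_lattice b X /\ inS t l e /\ forall j, Z j = X j + e j.

Definition perfect_code (n t l : nat) (b : 'I_n -> zvec n) : Prop :=
  lin_indep b /\ packing t l b /\ covering t l b.

(* Main.v *)
Require Import Defs.
From mathcomp Require Import all_boot all_order all_algebra.
From mathcomp Require Import zify.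
From Stdlib Require Classical_Prop.
Set Implicit Arguments. Unset Strict Implicit. Unset Printing Implicit Defensive.
Import Order.TTheory GRing.Theory Num.Theory.
Local Open Scope ring_scope.

Lemma wH_zeros2 n (e : zvec n) a b : a != b -> e a = 0 -> e b = 0 -> (wH e <= n - 2)%N.
Proof.
move=> ab ea eb; rewrite /wH.
have hc : (#|~: [set a; b]| = n - 2)%N.
  have := cardsC [set a; b]; rewrite cards2 ab card_ord /=; set c := #|~: _|; clearbody c => <-; by rewrite addKn.
rewrite -hc; apply: subset_leq_card; apply/subsetP => i; rewrite !inE /=.
apply: contraNN => /orP [] /eqP ->; by rewrite ?ea ?eb.
Qed.

Lemma wH_supp2 n (e : zvec n) a b : (forall i, i != a -> i != b -> e i = 0) -> (wH e <= 2)%N.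
Proof.
move=> H; rewrite /wH; apply: (@leq_trans #|[set a; b]|); last by rewrite cards2; case: (a != b).
apply: subset_leq_card; apply/subsetP => i; rewrite !inE /=.
by apply: contraR; rewrite negb_or => /andP [ia ib]; rewrite H.
Qed.

Lemma zeros2 n (e : zvec n) : (2 <= n)%N -> (wH e <= n - 2)%N -> exists a b, [/\ a != b, e a = 0 & e b = 0].
Proof.
move=> hn H.
pose P := [pred i : 'I_n | e i == 0].
have : (1 < #|P|)%N.
  have := cardC P; rewrite card_ord.
  have -> : #|[predC P]| = wH e by apply: eq_card => i; rewrite !inE.
  move: H; move: (#|P|) (wH e) => x y; clear -hn; lia.
move/card_gt1P => [x [y [hx hy xy]]]; exists x, y; split => //; apply/eqP; by rewrite inE in hx hy.
Qed.

Lemma three n (k : 'I_n) : (3 <= n)%N -> exists a b, [/\ a != b, a != k & b != k].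
Proof.
move=> hn.
have : (1 < #|[pred i : 'I_n | i != k]|)%N.
  have := cardC [pred i : 'I_n | i != k]; rewrite card_ord.
  have -> : #|[predC [pred i : 'I_n | i != k]]| = 1%N.
    rewrite -(card1 k); apply: eq_card => i; rewrite !inE; by rewrite negbK.
  move: (#|_|) => x; lia.
move/card_gt1P => [x [y [hx hy xy]]]; exists x, y; split => //; by rewrite inE in hx hy.
Qed.

Lemma lat_ext n (b : 'I_n -> zvec n) X Y : in_lattice b X -> (forall j, X j = Y j) -> in_lattice b Y.
Proof. by move=> [c hc] h; exists c => j; rewrite -h hc. Qed.

Lemma lat0 n (b : 'I_n -> zvec n) : in_lattice b (fun _ => 0).
Proof. exists (fun _ => 0) => j; rewrite /zcomb big1 // => i _; by rewrite mul0r. Qed.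

Lemma latB n (b : 'I_n -> zvec n) X Y : in_lattice b X -> in_lattice b Y ->
  in_lattice b (fun j => X j - Y j).
Proof.
move=> [c hc] [d hd]; exists (fun i => c i - d i) => j.
by rewrite hc hd /zcomb -sumrB; apply: eq_bigr => i _; rewrite mulrBl.
Qed.

Lemma latD n (b : 'I_n -> zvec n) X Y : in_lattice b X -> in_lattice b Y ->
  in_lattice b (fun j => X j + Y j).
Proof.
move=> hX hY; have hN := latB (lat0 b) hY.
apply: lat_ext (latB hX hN) _ => j; by rewrite sub0r opprK.
Qed.

Definition pp (x : int) : int := if 0 < x then x else 0.
Definition nq (x : int) : int := if 0 < x then 0 else - x.

Lemma nolat n l (b : 'I_n -> zvec n) D : packing (n - 2) l b -> in_lattice b D ->
  (forall i, - (l%:Z) <= D i <= l%:Z) ->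
  (wH (fun i => pp (D i)) <= n - 2)%N -> (wH (fun i => nq (D i)) <= n - 2)%N ->
  forall i, D i = 0.
Proof.
move=> hp hD hb h1 h2 i.
have := hp D (fun _ => 0) (fun i => nq (D i)) (fun i => pp (D i)) hD (lat0 b).
apply.
- split => // j; rewrite /nq; case: ifP => hj; first by rewrite lexx /=; lia.
  have := hb j; lia.
- split => // j; rewrite /pp; case: ifP => hj; last by rewrite lexx /=; lia.
  have := hb j; lia.
- move=> j; rewrite /nq /pp; case: ifP => _; rewrite ?addr0 ?add0r //; by rewrite subrr.
Qed.

Lemma pp0 x : x <= 0 -> pp x = 0.
Proof. rewrite /pp; case: ifP => //; lia. Qed.
Lemma nq0 x : 0 <= x -> nq x = 0.
Proof. rewrite /nq; case: ifP => //; lia. Qed.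

Lemma Vlem n l (b : 'I_n -> zvec n) : (4 <= n)%N -> (1 <= l)%N ->
  packing (n - 2) l b -> covering (n - 2) l b -> forall m : 'I_n,
  exists c : int, 1 <= c <= l%:Z + 1 /\ in_lattice b (fun i => if i == m then 1 - c else 1).
Proof.
move=> hn hl hp hc m.
have [X [t [hX [[ht0 ht1] hP]]]] := hc (fun i => if i == m then 0 else 1).
have Xnz : ~ (forall i, X i = 0).
  move=> h0; have [a [b' [ab ta tb]]] := zeros2 (ltnW (ltnW hn)) ht1.
  have Pa := hP a; have Pb := hP b'; rewrite h0 ta add0r in Pa; rewrite h0 tb add0r in Pb.
  move: Pa Pb; case: (eqVneq a m) => [ea|na]; case: (eqVneq b' m) => [eb|nb] //=.
  by move: ab; rewrite ea eb eqxx.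
have tz : forall i, i != m -> t i = 0.
  move=> i0 hi0; case: (eqVneq (t i0) 0) => // hne; exfalso; apply: Xnz.
  apply: (nolat hp hX).
  - move=> i; have := hP i; have := ht0 i; case: (i == m); lia.
  - apply: (wH_zeros2 hi0); apply: pp0.
      have := hP i0; have := ht0 i0; rewrite (negbTE hi0); move: hne; lia.
    have := hP m; have := ht0 m; rewrite eqxx; lia.
  - have [a [b' [ab ta tb]]] := zeros2 (ltnW (ltnW hn)) ht1.
    apply: (wH_zeros2 ab); apply: nq0; [have := hP a | have := hP b'];
      rewrite ?ta ?tb; case: (_ == m); lia.
exists (1 + t m); split; first by have := ht0 m; lia.
apply: (lat_ext hX) => i; have := hP i; case: eqP => [-> | /eqP him]; first lia.
by rewrite tz //; lia.
Qed.

Definition Vv n (m : 'I_n) (c : int) : zvec n := fun i => if i == m then 1 - c else 1.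

Lemma wH_small n (e : zvec n) a b : (4 <= n)%N ->
  (forall i, i != a -> i != b -> e i = 0) -> (wH e <= n - 2)%N.
Proof. move=> hn h; apply: leq_trans (wH_supp2 h) _; lia. Qed.

Lemma two_small n l (b : 'I_n -> zvec n) : (4 <= n)%N -> packing (n - 2) l b ->
  forall (a b' : 'I_n) ca cb, a != b' -> 1 <= ca <= l%:Z -> 1 <= cb <= l%:Z ->
  in_lattice b (Vv a ca) -> in_lattice b (Vv b' cb) -> False.
Proof.
move=> hn hp a b' ca cb ab hca hcb ha hb.
have h : forall i, Vv a ca i - Vv b' cb i = 0.
  apply: (nolat hp (latB ha hb)); rewrite /Vv.
  - move=> i; case: (i == a); case: (i == b'); lia.
  - apply: (wH_small (a := b') (b := b')) => // i ib _; apply: pp0.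
    rewrite (negbTE ib); case: (i == a); lia.
  - apply: (wH_small (a := a) (b := a)) => // i ia _; apply: nq0.
    rewrite (negbTE ia); case: (i == b'); lia.
have := h a; rewrite /Vv eqxx (negbTE ab); lia.
Qed.

Lemma goodk n l (b : 'I_n -> zvec n) : (4 <= n)%N -> (1 <= l)%N ->
  packing (n - 2) l b -> covering (n - 2) l b ->
  exists k : 'I_n, forall j, j != k -> in_lattice b (Vv j (l%:Z + 1)).
Proof.
move=> hn hl hp hc.
have V := Vlem hn hl hp hc.
case: (Classical_Prop.classic (exists k c, 1 <= c <= l%:Z /\ in_lattice b (Vv k c))).
- move=> [k [c [hc1 hk]]]; exists k => j jk.
  have [cj [hcj hj]] := V j.
  have [hle|hgt] : cj <= l%:Z \/ cj = l%:Z + 1 by lia.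
  + exfalso; apply: (two_small hn hp jk _ hc1 hj hk); lia.
  + by rewrite -hgt.
- move=> hno.
  have h0 : (0 < n)%N by lia.
  exists (Ordinal h0) => j _.
  have [cj [hcj hj]] := V j.
  have [hle|hgt] : cj <= l%:Z \/ cj = l%:Z + 1 by lia.
  + exfalso; apply: hno; exists j, cj; split => //; lia.
  + by rewrite -hgt.
Qed.

Theorem mainTheorem5 (n l : nat) :
  (4 <= n)%N -> (1 <= l)%N ->
  ~ exists b : 'I_n -> zvec n, perfect_code (n - 2) l b.
Proof.
move=> hn hl [b [_ [hp hc]]].
have [k hk] := goodk hn hl hp hc.
have [l1|hl2] : l = 1%N \/ (2 <= l)%N by lia.
- idtac.
  have [X [s [hX [[hs0 hs1] hZ]]]] := hc (fun i => if i == k then -1 else 0).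
  have hY := latB (lat0 b) hX.
  have [a [a' [aa' sa sa']]] := zeros2 (ltnW (ltnW hn)) hs1.
  have sk : s k = 0 \/ s k = 1 by have := hs0 k; lia.
  case: sk => sk.
  + have [j [jk sj]] : exists j, j != k /\ s j = 0.
      case: (eqVneq a k) => [ak|ak]; last by exists a.
      by exists a'; split => //; move: aa'; rewrite ak eq_sym.
    have kj : (k == j) = false by rewrite eq_sym (negbTE jk).
    have hD := latB hY (hk j jk).
    have h : forall i, (0 - X i) - Vv j (l%:Z + 1) i = 0.
      apply: (nolat hp hD).
      - move=> i; have := hZ i; have := hs0 i; rewrite /Vv.
        case: (eqVneq i k) => [->|ik]; [rewrite ?eqxx kj | rewrite ?(negbTE ik); case: (eqVneq i j) => [->|]]; lia.
      - apply: (wH_small (a := j) (b := j)) => // i ij _; apply: pp0.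
        have := hZ i; have := hs0 i; rewrite /Vv (negbTE ij); case: eqP => [->|_]; lia.
      - apply: (wH_zeros2 jk); apply: nq0.
          have := hZ j; rewrite /Vv eqxx (negbTE jk); lia.
        have := hZ k; rewrite /Vv eqxx kj; lia.
    have := h j; rewrite /Vv eqxx; have := hZ j; rewrite (negbTE jk); lia.
  + have ak : a != k by apply/eqP => e; rewrite e sk in sa.
    have ka : (k == a) = false by rewrite eq_sym (negbTE ak).
    have hD := latB hY (hk a ak).
    have h : forall i, (0 - X i) - Vv a (l%:Z + 1) i = 0.
      apply: (nolat hp hD).
      - move=> i; have := hZ i; have := hs0 i; rewrite /Vv.
        case: (eqVneq i k) => [->|ik]; [rewrite ?eqxx ka | rewrite ?(negbTE ik); case: (eqVneq i a) => [->|]]; lia.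
      - apply: (wH_small (a := a) (b := k)) => // i ia ik; apply: pp0.
        have := hZ i; have := hs0 i; rewrite /Vv (negbTE ia) (negbTE ik); lia.
      - apply: (wH_zeros2 ak); apply: nq0.
          have := hZ a; rewrite /Vv eqxx (negbTE ak); lia.
        have := hZ k; rewrite /Vv eqxx ka; lia.
    have := h a; rewrite /Vv eqxx; have := hZ a; rewrite (negbTE ak); lia.
- have [a [a' [aa' ak a'k]]] := three k (leq_trans (isT : (3 <= 4)%N) hn).
  have ka : (k == a) = false by rewrite eq_sym (negbTE ak).
  have ka' : (k == a') = false by rewrite eq_sym (negbTE a'k).
  have a'a : (a' == a) = false by rewrite eq_sym (negbTE aa').
  have hD := latD (hk a ak) (hk a' a'k).
  have h : forall i, Vv a (l%:Z + 1) i + Vv a' (l%:Z + 1) i = 0.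
    apply: (nolat hp hD).
    - move=> i; rewrite /Vv; case: (eqVneq i a) => [->|ia]; [rewrite ?eqxx ?(negbTE aa') | case: (i == a')]; lia.
    - apply: (wH_zeros2 aa'); apply: pp0; rewrite /Vv eqxx ?(negbTE aa') ?a'a; lia.
    - apply: (wH_small (a := a) (b := a')) => // i ia ia'; apply: nq0.
      rewrite /Vv (negbTE ia) (negbTE ia'); lia.
  have := h k; rewrite /Vv ka ka'; lia.
Qed.
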